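(* Let $\beta_{\mathtt{H}},\beta_{\mathtt{L}},\gamma_{\mathtt{H}},\gamma_{\mathtt{L}}>0$ with $\beta_{\mathtt{H}}/\gamma_{\mathtt{H}}>\beta_{\mathtt{L}}/\gamma_{\mathtt{L}}$ and $\beta_{\mathtt{H}}>\beta_{\mathtt{L}}$, let $q_{\mathtt{HL}},q_{\mathtt{LH}}\ge 0$, $\alpha\in(0,1)$, fix $z_{\mathtt{S}}\in[0,1]$, and set $\hat\beta_{\mathtt{Q}}:=\beta_{\mathtt{Q}}(\alpha z_{\mathtt{S}}+1-z_{\mathtt{S}})$ for $\mathtt{Q}\in\{\mathtt{H},\mathtt{L}\}$. Consider the dynamics \begin{align*} \dot{\mathtt{I}}_{\mathtt{H}}&=\hat\beta_{\mathtt{H}}\mathtt{I}_{\mathtt{H}}(1-\mathtt{I}_{\mathtt{H}}-\mathtt{I}_{\mathtt{L}})+q_{\mathtt{LH}}\mathtt{I}_{\mathtt{L}}-(q_{\mathtt{HL}}+\gamma_{\mathtt{H}})\mathtt{I}_{\mathtt{H}},\\ \dot{\mathtt{I}}_{\mathtt{L}}&=\hat\beta_{\mathtt{L}}\mathtt{I}_{\mathtt{L}}(1-\mathtt{I}_{\mathtt{H}}-\mathtt{I}_{\mathtt{L}})+q_{\mathtt{HL}}\mathtt{I}_{\mathtt{H}}-(q_{\mathtt{LH}}+\gamma_{\mathtt{L}})\mathtt{I}_{\mathtt{L}}. \end{align*} If $(\mathtt{I}^\star_{\mathtt{H}},\mathtt{I}^\star_{\mathtt{L}})\in(0,1)^2$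 is an equilibrium of this system (an endemic equilibrium), then it is locally stable.
   Context: Bi-virus SIS model with strains $\mathtt{H},\mathtt{L}$: $\mathtt{I}_{\mathtt{H}},\mathtt{I}_{\mathtt{L}}$ are infected fractions, $1-\mathtt{I}_{\mathtt{H}}-\mathtt{I}_{\mathtt{L}}$ the susceptible fraction, $\beta$'s transmission rates, $\gamma$'s recovery rates, $q_{\mathtt{HL}},q_{\mathtt{LH}}$ mutation rates, $z_{\mathtt{S}}$ fraction of susceptibles protected, protection scaling infection rates by $\alpha$. *)

(* Defs.v *)
From Stdlib Require Import Reals Lra.
Open Scope R_scope.

Definition bhat (beta alpha zS : R) : R := beta * (alpha * zS + 1 - zS).

Definition fH (bH bL gH gL qHL qLH alpha zS : R) (IH IL : R) : R :=
  bhat bH alpha zS * IH * (1 - IH - IL) + qLH * IL - (qHL + gH) * IH.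

Definition fL (bH bL gH gL qHL qLH alpha zS : R) (IH IL : R) : R :=
  bhat bL alpha zS * IL * (1 - IH - IL) + qHL * IH - (qLH + gL) * IL.

Definition is_solution (F G : R -> R -> R) (x y : R -> R) : Prop :=
  (forall eps, 0 < eps -> exists delta, 0 < delta /\
     forall t, 0 <= t < delta -> Rabs (x t - x 0) < eps /\ Rabs (y t - y 0) < eps) /\
  (forall t, 0 < t ->
     derivable_pt_lim x t (F (x t) (y t)) /\ derivable_pt_lim y t (G (x t) (y t))).

Definition dist2 (a b c d : R) : R := Rmax (Rabs (a - c)) (Rabs (b - d)).

Definition is_equilibrium (F G : R -> R -> R) (eH eL : R) : Prop :=
  F eH eL = 0 /\ G eH eL = 0.

(* Local (asymptotic) stability of an equilibrium: Lyapunov stable and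
   locally attractive. *)
Definition locally_stable (F G : R -> R -> R) (eH eL : R) : Prop :=
  (forall eps, 0 < eps -> exists delta, 0 < delta /\
     forall x y, is_solution F G x y -> dist2 (x 0) (y 0) eH eL < delta ->
       forall t, 0 <= t -> dist2 (x t) (y t) eH eL < eps) /\
  (exists delta, 0 < delta /\
     forall x y, is_solution F G x y -> dist2 (x 0) (y 0) eH eL < delta ->
       forall eps, 0 < eps -> exists T, forall t, T <= t ->
         dist2 (x t) (y t) eH eL < eps).

(* Main.v *)
Require Import Defs.
From Stdlib Require Import Reals.
From Stdlib Require Import Lra Psatz FunctionalExtensionality Classical.
Open Scope R_scope.


Lemma dpl_ext f g t l l' : derivable_pt_lim f t l -> (forall s, f s = g s) -> l = l' -> derivable_pt_lim g t l'.
Proof. intros H E <-. replace g with f; [exact H| apply functional_extensionality; exact E]. Qed.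

Definition Qf p r s u v := p*(u*u) + 2*r*(u*v) + s*(v*v).

Lemma dpl_quad (x y : R -> R) t x' y' eH eL p r s :
  derivable_pt_lim x t x' -> derivable_pt_lim y t y' ->
  derivable_pt_lim (fun t => Qf p r s (x t - eH) (y t - eL)) t
   (2*(p*(x t - eH) + r*(y t - eL))*x' + 2*(r*(x t - eH) + s*(y t - eL))*y').
Proof.
  intros Hx Hy.
  assert (Hu := derivable_pt_lim_minus x (fct_cte eH) t x' 0 Hx (derivable_pt_lim_const eH t)).
  assert (Hv := derivable_pt_lim_minus y (fct_cte eL) t y' 0 Hy (derivable_pt_lim_const eL t)).
  assert (H1 := derivable_pt_lim_scal _ p t _ (derivable_pt_lim_mult _ _ t _ _ Hu Hu)).
  assert (H2 := derivable_pt_lim_scal _ (2*r) t _ (derivable_pt_lim_mult _ _ t _ _ Hu Hv)).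
  assert (H3 := derivable_pt_lim_scal _ s t _ (derivable_pt_lim_mult _ _ t _ _ Hv Hv)).
  assert (H := derivable_pt_lim_plus _ _ t _ _ (derivable_pt_lim_plus _ _ t _ _ H1 H2) H3).
  eapply dpl_ext; [exact H | intro z; unfold Qf; reflexivity | unfold minus_fct, fct_cte, mult_real_fct, mult_fct; ring].
Qed.

Lemma dpl_expmul (f : R -> R) t l k :
  derivable_pt_lim f t l ->
  derivable_pt_lim (fun t => exp (k*t) * f t) t (k*exp (k*t) * f t + exp (k*t) * l).
Proof.
  intros Hf.
  assert (Hk := derivable_pt_lim_scal id k t 1 (derivable_pt_lim_id t)).
  assert (He := derivable_pt_lim_comp _ exp t _ _ Hk (derivable_pt_lim_exp _)).
  assert (H := derivable_pt_lim_mult _ _ t _ _ He Hf).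
  eapply dpl_ext; [exact H | intro z; reflexivity | unfold comp, mult_real_fct, id; ring].
Qed.

Lemma abs_sq u : Rabs u * Rabs u = u*u.
Proof. rewrite <- Rabs_mult. apply Rabs_pos_eq. nra. Qed.

Lemma sq_lt_abs u e : 0 < e -> u*u < e*e -> Rabs u < e.
Proof. intros He H. destruct (Rlt_or_le (Rabs u) e) as [h|h]; auto.
  rewrite <- abs_sq in H. nra. Qed.

Lemma abs_lt_sq u e : Rabs u < e -> u*u < e*e.
Proof. intros H. rewrite <- abs_sq. pose proof (Rabs_pos u). nra. Qed.

Lemma abs_bnd2 a b u v M : Rabs a <= M -> Rabs b <= M ->
  Rabs (a*u + b*v) <= M * (Rabs u + Rabs v).
Proof. intros Ha Hb.
  eapply Rle_trans; [apply Rabs_triang|]. rewrite !Rabs_mult.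
  pose proof (Rabs_pos u); pose proof (Rabs_pos v); pose proof (Rabs_pos a); pose proof (Rabs_pos b). nra. Qed.

Lemma quad_cont p r s u0 v0 e : 0 < e -> exists eta, 0 < eta /\ forall u v,
  Rabs (u - u0) < eta -> Rabs (v - v0) < eta -> Rabs (Qf p r s u v - Qf p r s u0 v0) < e.
Proof.
  intros He.
  set (B1 := Rabs p * (2*Rabs u0 + 1) + 2*Rabs r*Rabs v0).
  set (B2 := 2*Rabs r*(Rabs u0 + 1) + Rabs s*(2*Rabs v0+1)).
  assert (HB1 : 0 <= B1) by (unfold B1; pose proof (Rabs_pos p); pose proof (Rabs_pos r); pose proof (Rabs_pos u0); pose proof (Rabs_pos v0); nra).
  assert (HB2 : 0 <= B2) by (unfold B2; pose proof (Rabs_pos s); pose proof (Rabs_pos r); pose proof (Rabs_pos u0); pose proof (Rabs_pos v0); nra).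
  exists (Rmin 1 (e / (B1 + B2 + 1))). split.
  { apply Rmin_pos; [lra|]. apply Rdiv_lt_0_compat; lra. }
  intros u v Hu Hv.
  assert (Hu1 : Rabs (u - u0) < 1) by (eapply Rlt_le_trans; [exact Hu| apply Rmin_l]).
  assert (Hv1 : Rabs (v - v0) < 1) by (eapply Rlt_le_trans; [exact Hv| apply Rmin_l]).
  assert (Hu2 : Rabs (u - u0) < e / (B1+B2+1)) by (eapply Rlt_le_trans; [exact Hu| apply Rmin_r]).
  assert (Hv2 : Rabs (v - v0) < e / (B1+B2+1)) by (eapply Rlt_le_trans; [exact Hv| apply Rmin_r]).
  set (du := u - u0) in *. set (dv := v - v0) in *.
  assert (E : Qf p r s u v - Qf p r s u0 v0 =
     du*(p*(2*u0+du) + 2*r*v0) + dv*(2*r*(u0+du) + s*(2*v0+dv))).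
  { unfold Qf, du, dv; ring. }
  rewrite E.
  assert (A1 : Rabs (p*(2*u0+du) + 2*r*v0) <= B1).
  { eapply Rle_trans; [apply Rabs_triang|]. rewrite !Rabs_mult.
    assert (Rabs (2*u0+du) <= 2*Rabs u0 + 1).
    { eapply Rle_trans; [apply Rabs_triang|]. rewrite Rabs_mult. rewrite (Rabs_pos_eq 2) by lra. lra. }
    rewrite (Rabs_pos_eq 2) by lra. unfold B1.
    pose proof (Rabs_pos p). nra. }
  assert (A2 : Rabs (2*r*(u0+du) + s*(2*v0+dv)) <= B2).
  { eapply Rle_trans; [apply Rabs_triang|]. rewrite !Rabs_mult.
    assert (Rabs (2*v0+dv) <= 2*Rabs v0 + 1).
    { eapply Rle_trans; [apply Rabs_triang|]. rewrite Rabs_mult. rewrite (Rabs_pos_eq 2) by lra. lra. }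
    assert (Rabs (u0+du) <= Rabs u0 + 1).
    { eapply Rle_trans; [apply Rabs_triang|]. lra. }
    rewrite (Rabs_pos_eq 2) by lra. unfold B2.
    pose proof (Rabs_pos s). pose proof (Rabs_pos r). nra. }
  eapply Rle_lt_trans; [apply Rabs_triang|]. rewrite !Rabs_mult.
  assert (Hk : e / (B1 + B2 + 1) * (B1 + B2 + 1) = e) by (field; lra).
  pose proof (Rabs_pos du); pose proof (Rabs_pos dv);
  pose proof (Rabs_pos (p*(2*u0+du) + 2*r*v0)); pose proof (Rabs_pos (2*r*(u0+du) + s*(2*v0+dv))).
  nra.
Qed.

Definition Dt a b c d := a*d - b*c.
Definition Pp a b c d := Dt a b c d + c*c + d*d.
Definition Pr a b c d := -(a*c+b*d).
Definition Ps a b c d := Dt a b c d + a*a + b*b.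

Lemma lin_id a b c d u v h1 h2 :
  let p := Pp a b c d in let r := Pr a b c d in let s := Ps a b c d in
  2*(p*u + r*v)*(a*u+b*v+h1) + 2*(r*u+s*v)*(c*u+d*v+h2) =
  2*(a+d)*Dt a b c d*(u*u+v*v) + 2*(p*u+r*v)*h1 + 2*(r*u+s*v)*h2.
Proof. unfold Pp, Pr, Ps, Dt. simpl. ring. Qed.

Lemma detP a b c d : Pp a b c d * Ps a b c d - Pr a b c d * Pr a b c d =
  2*Dt a b c d*Dt a b c d + Dt a b c d*(a*a+b*b+c*c+d*d).
Proof. unfold Pp, Pr, Ps, Dt. ring. Qed.

Lemma Q_upper p r s u v : 0 < p -> 0 < s -> r*r <= p*s -> Qf p r s u v <= (p+s)*(u*u+v*v).
Proof. intros Hp Hs Hd. unfold Qf.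
  assert (E : s*(s*(u*u) - 2*r*(u*v) + p*(v*v)) = (s*u - r*v)^2 + (p*s - r*r)*(v*v)) by ring.
  assert (0 <= s*(u*u) - 2*r*(u*v) + p*(v*v)).
  { destruct (Rlt_or_le (s*(u*u) - 2*r*(u*v) + p*(v*v)) 0) as [h|h]; auto.
    assert (s*(s*(u*u) - 2*r*(u*v) + p*(v*v)) < 0) by nra.
    assert (0 <= (s*u - r*v)^2) by apply pow2_ge_0. assert (0 <= (p*s - r*r)*(v*v)) by (apply Rmult_le_pos; [lra| apply Rle_0_sqr]). lra. }
  lra. Qed.

Lemma Q_lower p r s u v : 0 < p -> 0 < s -> r*r < p*s ->
  (p*s - r*r)/(p+s)*(u*u+v*v) <= Qf p r s u v.
Proof. intros Hp Hs Hd. set (mu := (p*s - r*r)/(p+s)).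
  assert (Hm : mu*(p+s) = p*s - r*r) by (unfold mu; field; lra).
  assert (Hm0 : 0 < mu) by (unfold mu; apply Rdiv_lt_0_compat; lra).
  assert (Hmp : mu <= p) by nra. assert (Hms : mu <= s) by nra.
  assert (Hdet : (p-mu)*(s-mu) - r*r = mu*mu) by nra.
  unfold Qf.
  destruct (Req_dec (p - mu) 0) as [E|E].
  - assert (r = 0) by nra. subst r. assert (0 <= (s-mu)*(v*v)) by (apply Rmult_le_pos; [lra|apply Rle_0_sqr]). fold mu. nra.
  - assert (0 < p - mu) by lra.
    (* (p-mu) Q' = ((p-mu)u + r v)^2 + ((p-mu)(s-mu) - r^2) v^2 *)
    assert ((p-mu)*((p-mu)*(u*u) + 2*r*(u*v) + (s-mu)*(v*v)) = ((p-mu)*u + r*v)^2 + mu*mu*(v*v)) by (rewrite <- Hdet; ring).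
    assert (0 <= (p-mu)*(u*u) + 2*r*(u*v) + (s-mu)*(v*v)).
    { destruct (Rlt_or_le ((p-mu)*(u*u) + 2*r*(u*v) + (s-mu)*(v*v)) 0) as [h|h]; auto.
      assert ((p-mu)*((p-mu)*(u*u) + 2*r*(u*v) + (s-mu)*(v*v)) < 0) by (apply Rmult_pos_neg; lra).
      assert (0 <= ((p-mu)*u + r*v)^2) by apply pow2_ge_0.
      assert (0 <= mu*mu*(v*v)) by (apply Rmult_le_pos; [nra| apply Rle_0_sqr]). lra. }
    assert (mu*(u*u+v*v) - ((p-mu)*(u*u) + 2*r*(u*v) + (s-mu)*(v*v)) = p*(u*u) + 2*r*(u*v) + s*(v*v) - 2*((p-mu)*(u*u) + 2*r*(u*v) + (s-mu)*(v*v)) + mu*(u*u+v*v) - mu*(u*u+v*v)) by ring.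
    fold mu. lra.
Qed.

Lemma mvt_noninc (f f' : R -> R) a b : 0 < a -> a <= b ->
  (forall t, 0 < t -> derivable_pt_lim f t (f' t)) ->
  (forall t, a < t < b -> f' t <= 0) -> f b <= f a.
Proof.
  intros Ha Hab Hd Hn. destruct (Req_dec a b) as [<-|Hne]; [lra|].
  destruct (MVT_cor2 f f' a b) as [z [Hz1 Hz2]]; [lra| intros; apply Hd; lra |].
  assert (f' z <= 0) by (apply Hn; lra). assert (f' z * (b - a) <= 0) by nra. lra.
Qed.

Lemma cont_of_dpl f t l : derivable_pt_lim f t l -> forall e, 0 < e -> exists al, 0 < al /\
  forall z, Rabs (z - t) < al -> Rabs (f z - f t) < e.
Proof.
  intros H e He. assert (Hc : continuity_pt f t) by (apply derivable_continuous_pt; exists l; exact H).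
  destruct (Hc e He) as [al [Hal Hz]]. exists al. split; auto.
  intros z Hzt. destruct (Req_dec z t) as [->|Hne].
  - unfold Rminus. rewrite Rplus_opp_r, Rabs_R0. exact He.
  - apply (Hz z). split; [split; [exact I| auto] | exact Hzt].
Qed.

Lemma core (V V' : R -> R) (k r0 : R) : 0 < k ->
  (forall t, 0 < t -> derivable_pt_lim V t (V' t)) ->
  (forall t, 0 < t -> V t < r0 -> V' t <= - k * V t) ->
  (forall t, 0 <= V t) ->
  (forall c0, V 0 < c0 -> exists eta, 0 < eta /\ forall t, 0 <= t < eta -> V t < c0) ->
  forall c0, V 0 < c0 -> c0 <= r0 ->
  (forall t, 0 <= t -> V t < c0) /\ (forall t, 1 <= t -> exp (k*t) * V t <= exp k * V 1).
Proof.
  intros Hk HV HV' HVnn HRC c0 Hc0 Hcr.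
  assert (Hin : forall t, 0 <= t -> V t < c0).
  { intros t1 Ht1. destruct (Rlt_or_le (V t1) c0) as [ok|Hbad]; [exact ok| exfalso].
    destruct (HRC c0 Hc0) as [eta0 [Heta0 Hbeg]].
    destruct (Rlt_or_le t1 eta0) as [Hs|Hs]. { assert (V t1 < c0) by (apply Hbeg; lra). lra. }
    set (E := fun s => 0 <= s <= t1 /\ forall r, 0 <= r <= s -> V r < c0).
    assert (HEb : bound E). { exists t1. intros z [[_ Hz] _]. exact Hz. }
    assert (HEn : exists z, E z). { exists (eta0/2). split; [lra|]. intros r Hr. apply Hbeg; lra. }
    destruct (completeness E HEb HEn) as [s1 [Hub Hlub]].
    assert (Hs1a : eta0/2 <= s1). { apply Hub. split; [lra|]. intros r Hr. apply Hbeg; lra. }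
    assert (Hs1b : s1 <= t1). { apply Hlub. intros z [[_ Hz] _]. exact Hz. }
    assert (Hbelow : forall r, 0 <= r < s1 -> V r < c0).
    { intros r Hr. destruct (classic (exists z, E z /\ r < z)) as [[z [[_ Hz] Hrz]]|Hno].
      - apply Hz. lra.
      - assert (s1 <= r). { apply Hlub. intros z Hz. destruct (Rle_or_lt z r) as [h|h]; auto.
          exfalso. apply Hno. exists z. auto. }
        lra. }
    destruct (Rlt_or_le (V s1) c0) as [Hlt|Hge].
    + assert (Hne : s1 < t1). { destruct (Req_dec s1 t1) as [->|]; [lra|lra]. }
      destruct (cont_of_dpl V s1 (V' s1) (HV s1 ltac:(lra)) (c0 - V s1) ltac:(lra)) as [al [Hal Hcl]].
      set (s2 := s1 + Rmin (al/2) (t1 - s1)).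
      assert (Hmin1 : 0 < Rmin (al/2) (t1 - s1)) by (apply Rmin_pos; lra).
      assert (Hmin2 : Rmin (al/2) (t1 - s1) <= al/2) by apply Rmin_l.
      assert (Hmin3 : Rmin (al/2) (t1 - s1) <= t1 - s1) by apply Rmin_r.
      assert (E s2).
      { split; [unfold s2; lra|]. intros r Hr.
        destruct (Rlt_or_le r s1) as [h|h]; [apply Hbelow; lra|].
        assert (Rabs (V r - V s1) < c0 - V s1) by (apply Hcl; rewrite Rabs_pos_eq; unfold s2 in Hr; lra).
        apply Rabs_def2 in H. lra. }
      assert (s2 <= s1) by (apply Hub; auto). unfold s2 in *. lra.
    + assert (V s1 <= V (eta0/4)).
      { apply (mvt_noninc V V'); try lra; auto.
        intros t Ht. assert (V t < c0) by (apply Hbelow; lra).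
        assert (V' t <= - k * V t) by (apply HV'; lra). pose proof (HVnn t). nra. }
      assert (V (eta0/4) < c0) by (apply Hbeg; lra). lra. }
  split; [exact Hin|].
  intros t Ht. replace (exp k) with (exp (k*1)) by (rewrite Rmult_1_r; reflexivity).
  apply (mvt_noninc (fun t => exp (k*t) * V t) (fun t => k*exp (k*t) * V t + exp (k*t) * V' t) 1 t); try lra.
  - intros z Hz. apply dpl_expmul. apply HV; lra.
  - intros z Hz. assert (V z < c0) by (apply Hin; lra).
    assert (V' z <= - k * V z) by (apply HV'; lra).
    pose proof (exp_pos (k*z)). pose proof (HVnn z). nra.
Qed.

Lemma planar_stable (F G : R->R->R) (eH eL a b c d K : R) :
  a + d < 0 -> 0 < Dt a b c d -> 0 <= K ->
  (forall u v, Rabs (F (eH+u) (eL+v) - (a*u + b*v)) <= K * ((Rabs u + Rabs v)*(Rabs u + Rabs v))) ->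
  (forall u v, Rabs (G (eH+u) (eL+v) - (c*u + d*v)) <= K * ((Rabs u + Rabs v)*(Rabs u + Rabs v))) ->
  locally_stable F G eH eL.
Proof.
  intros HT HD HK HF HG.
  pose proof (lin_id a b c d) as Hlin. cbv zeta in Hlin.
  pose proof (detP a b c d) as Hdet0.
  set (p := Pp a b c d) in *. set (r := Pr a b c d) in *. set (s := Ps a b c d) in *.
  set (D := Dt a b c d) in *.
  assert (Hp : 0 < p) by (unfold p, Pp; fold D; nra).
  assert (Hs : 0 < s) by (unfold s, Ps; fold D; nra).
  assert (Hdet : r*r < p*s) by nra.
  set (Pm := Rabs p + Rabs r + Rabs s).
  assert (HPm : 0 <= Pm) by (unfold Pm; pose proof (Rabs_pos p); pose proof (Rabs_pos r); pose proof (Rabs_pos s); lra).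
  set (m := -((a+d)*D)).
  assert (Hm : 0 < m) by (unfold m; nra).
  assert (HPK : 0 <= Pm*K) by (apply Rmult_le_pos; auto).
  set (del := m/(8*Pm*K+1)).
  assert (Hdel : 0 < del) by (unfold del; apply Rdiv_lt_0_compat; lra).
  assert (Hdel_eq : del*(8*Pm*K+1) = m) by (unfold del; field; lra).
  set (Lam := p+s).
  set (mu := (p*s-r*r)/(p+s)).
  assert (Hmu : 0 < mu) by (unfold mu; apply Rdiv_lt_0_compat; lra).
  assert (HLam : 0 < Lam) by (unfold Lam; lra).
  set (k := m/Lam).
  assert (Hk : 0 < k) by (unfold k; apply Rdiv_lt_0_compat; lra).
  set (r0 := mu*del*del/2).
  assert (Hr0 : 0 < r0) by (unfold r0; assert (0 < mu*del*del) by (apply Rmult_lt_0_compat; [apply Rmult_lt_0_compat|]; lra); lra).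
  assert (HQl : forall u v, mu*(u*u+v*v) <= Qf p r s u v) by (intros; apply Q_lower; lra).
  assert (HQu : forall u v, Qf p r s u v <= Lam*(u*u+v*v)) by (intros; apply Q_upper; lra).
  assert (HF3 : forall u v, Qf p r s u v < r0 -> Rabs u + Rabs v <= del).
  { intros u v HQ. pose proof (HQl u v).
    assert (HS2 : (Rabs u + Rabs v)*(Rabs u + Rabs v) <= 2*(u*u+v*v)).
    { rewrite <- (abs_sq u), <- (abs_sq v). pose proof (pow2_ge_0 (Rabs u - Rabs v)). nra. }
    assert (mu*(u*u+v*v) < mu*(del*del/2)) by (unfold r0 in HQ; lra).
    assert (u*u+v*v < del*del/2) by (apply (Rmult_lt_reg_l mu); lra).
    pose proof (Rabs_pos u); pose proof (Rabs_pos v). nra. }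
  assert (HF4 : forall u v, Rabs u + Rabs v <= del ->
     2*(p*u + r*v)*F (eH+u) (eL+v) + 2*(r*u+s*v)*G (eH+u) (eL+v) <= -m*(u*u+v*v)).
  { intros u v HS.
    set (h1 := F (eH+u) (eL+v) - (a*u+b*v)). set (h2 := G (eH+u) (eL+v) - (c*u+d*v)).
    assert (HF' := HF u v). assert (HG' := HG u v). fold h1 in HF'. fold h2 in HG'.
    replace (F (eH+u) (eL+v)) with (a*u+b*v+h1) by (unfold h1; ring).
    replace (G (eH+u) (eL+v)) with (c*u+d*v+h2) by (unfold h2; ring).
    rewrite Hlin.
    set (S := Rabs u + Rabs v) in *.
    assert (HS0 : 0 <= S) by (unfold S; pose proof (Rabs_pos u); pose proof (Rabs_pos v); lra).
    assert (HS2 : S*S <= 2*(u*u+v*v)).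
    { unfold S. rewrite <- (abs_sq u), <- (abs_sq v). pose proof (pow2_ge_0 (Rabs u - Rabs v)). nra. }
    assert (Hb1 : Rabs (p*u + r*v) <= Pm*S) by (apply abs_bnd2; unfold Pm; pose proof (Rabs_pos p); pose proof (Rabs_pos r); pose proof (Rabs_pos s); lra).
    assert (Hb2 : Rabs (r*u + s*v) <= Pm*S) by (apply abs_bnd2; unfold Pm; pose proof (Rabs_pos p); pose proof (Rabs_pos r); pose proof (Rabs_pos s); lra).
    assert (Hkey : forall X h, Rabs X <= Pm*S -> Rabs h <= K*(S*S) -> X*h <= Pm*K*del*(2*(u*u+v*v))).
    { intros X h HX Hh.
      assert (X*h <= Rabs X * Rabs h) by (rewrite <- Rabs_mult; apply Rle_abs).
      assert (Rabs X * Rabs h <= (Pm*S)*(K*(S*S))) by (apply Rmult_le_compat; auto using Rabs_pos).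
      assert ((Pm*S)*(K*(S*S)) = (Pm*K)*(S*(S*S))) by ring.
      assert (S*(S*S) <= del*(2*(u*u+v*v))) by (apply Rmult_le_compat; nra).
      assert ((Pm*K)*(S*(S*S)) <= (Pm*K)*(del*(2*(u*u+v*v)))) by (apply Rmult_le_compat_l; auto).
      lra. }
    pose proof (Hkey _ _ Hb1 HF'). pose proof (Hkey _ _ Hb2 HG').
    assert (HN : 0 <= u*u+v*v) by nra.
    assert (8*Pm*K*del <= m) by nra.
    assert (8*Pm*K*del*(u*u+v*v) <= m*(u*u+v*v)) by (apply Rmult_le_compat_r; lra).
    unfold m in *. fold D. nra. }
  assert (HF5 : forall u v, Qf p r s u v < r0 ->
     2*(p*u + r*v)*F (eH+u) (eL+v) + 2*(r*u+s*v)*G (eH+u) (eL+v) <= -k*Qf p r s u v).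
  { intros u v HQ. pose proof (HF4 u v (HF3 u v HQ)). pose proof (HQu u v).
    assert (k*Qf p r s u v <= k*(Lam*(u*u+v*v))) by (apply Rmult_le_compat_l; lra).
    assert (k*Lam = m) by (unfold k; field; lra). nra. }
  assert (Hmain : forall x y, is_solution F G x y -> forall c0,
     Qf p r s (x 0 - eH) (y 0 - eL) < c0 -> c0 <= r0 ->
     (forall t, 0 <= t -> Qf p r s (x t - eH) (y t - eL) < c0) /\
     (forall t, 1 <= t -> exp (k*t) * Qf p r s (x t - eH) (y t - eL) <= exp k * Qf p r s (x 1 - eH) (y 1 - eL))).
  { intros x y [Hrc Hder] c0 Hc0 Hcr.
    apply (core (fun t => Qf p r s (x t - eH) (y t - eL))
      (fun t => 2*(p*(x t - eH) + r*(y t - eL))*F (x t) (y t) + 2*(r*(x t - eH) + s*(y t - eL))*G (x t) (y t)) k r0); auto.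
    - intros t Ht. destruct (Hder t Ht). apply dpl_quad; auto.
    - intros t Ht HQ. pose proof (HF5 _ _ HQ) as H5.
      replace (eH + (x t - eH)) with (x t) in H5 by ring.
      replace (eL + (y t - eL)) with (y t) in H5 by ring. exact H5.
    - intros t. pose proof (HQl (x t - eH) (y t - eL)). assert (0 <= mu*((x t - eH)*(x t - eH) + (y t - eL)*(y t - eL))) by (apply Rmult_le_pos; [lra| pose proof (Rle_0_sqr (x t - eH)); pose proof (Rle_0_sqr (y t - eL)); unfold Rsqr in *; lra]). lra.
    - intros c1 Hc1.
      destruct (quad_cont p r s (x 0 - eH) (y 0 - eL) (c1 - Qf p r s (x 0 - eH) (y 0 - eL))) as [eta [Heta Hq]]; [lra|].
      destruct (Hrc eta Heta) as [de [Hde Hde']]. exists de. split; auto.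
      intros t Ht. destruct (Hde' t Ht) as [H1 H2].
      assert (Rabs (Qf p r s (x t - eH) (y t - eL) - Qf p r s (x 0 - eH) (y 0 - eL)) < c1 - Qf p r s (x 0 - eH) (y 0 - eL)).
      { apply Hq; [replace (x t - eH - (x 0 - eH)) with (x t - x 0) by ring | replace (y t - eL - (y 0 - eL)) with (y t - y 0) by ring]; auto. }
      apply Rabs_def2 in H. lra. }
  assert (Hinit : forall x y q, 0 < q -> dist2 (x 0) (y 0) eH eL < Rmin 1 (q/(2*Lam+1)) ->
     Qf p r s (x 0 - eH) (y 0 - eL) < q).
  { intros x y q Hq Hd. unfold dist2 in Hd.
    set (dd := Rmin 1 (q/(2*Lam+1))) in *.
    assert (Hd1 : dd <= 1) by apply Rmin_l. assert (Hd2 : dd <= q/(2*Lam+1)) by apply Rmin_r.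
    assert (Hu : Rabs (x 0 - eH) < dd) by (eapply Rle_lt_trans; [apply Rmax_l| exact Hd]).
    assert (Hv : Rabs (y 0 - eL) < dd) by (eapply Rle_lt_trans; [apply Rmax_r| exact Hd]).
    pose proof (abs_lt_sq _ _ Hu). pose proof (abs_lt_sq _ _ Hv).
    pose proof (Rabs_pos (x 0 - eH)).
    assert (0 < dd) by lra.
    pose proof (HQu (x 0 - eH) (y 0 - eL)).
    assert (dd*(2*Lam+1) <= q) by (apply (Rmult_le_reg_r (/(2*Lam+1))); [apply Rinv_0_lt_compat; lra|]; replace (q * / (2*Lam+1)) with (q/(2*Lam+1)) by reflexivity; replace (dd * (2 * Lam + 1) * / (2 * Lam + 1)) with dd by (field; lra); exact Hd2).
    assert (Lam*((x 0 - eH)*(x 0 - eH) + (y 0 - eL)*(y 0 - eL)) < Lam*(2*(dd*dd))) by (apply Rmult_lt_compat_l; lra).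
    nra. }
  assert (Hfin : forall X Y eps, 0 < eps -> Qf p r s (X - eH) (Y - eL) < mu*(eps*eps) -> dist2 X Y eH eL < eps).
  { intros X Y eps He HQ. pose proof (HQl (X - eH) (Y - eL)).
    assert (Hn : (X - eH)*(X - eH) + (Y - eL)*(Y - eL) < eps*eps) by (apply (Rmult_lt_reg_l mu); lra).
    unfold dist2. apply Rmax_lub_lt; apply sq_lt_abs; auto; pose proof (Rle_0_sqr (X - eH)); pose proof (Rle_0_sqr (Y - eL)); unfold Rsqr in *; lra. }
  split.
  - intros eps Heps.
    set (c1 := Rmin r0 (mu*(eps*eps))).
    assert (Hc1 : 0 < c1) by (unfold c1; apply Rmin_pos; [lra| apply Rmult_lt_0_compat; nra]).
    exists (Rmin 1 (c1/(2*Lam+1))). split. { apply Rmin_pos; [lra| apply Rdiv_lt_0_compat; lra]. }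
    intros x y Hsol Hd t Ht.
    pose proof (Hinit x y c1 Hc1 Hd).
    destruct (Hmain x y Hsol c1 H ltac:(apply Rmin_l)) as [Hall _].
    apply Hfin; auto. eapply Rlt_le_trans; [apply Hall; auto| apply Rmin_r].
  - exists (Rmin 1 (r0/(2*Lam+1))). split. { apply Rmin_pos; [lra| apply Rdiv_lt_0_compat; lra]. }
    intros x y Hsol Hd eps Heps.
    pose proof (Hinit x y r0 Hr0 Hd).
    destruct (Hmain x y Hsol r0 H ltac:(lra)) as [Hall Hdec].
    assert (Hme : 0 < mu*(eps*eps)) by (apply Rmult_lt_0_compat; nra).
    exists (1 + r0/(k*(mu*(eps*eps)))). intros t Ht.
    assert (Hq : 0 <= r0/(k*(mu*(eps*eps)))) by (apply Rlt_le, Rdiv_lt_0_compat; [lra| apply Rmult_lt_0_compat; lra]).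
    assert (Hq' : r0/(k*(mu*(eps*eps))) * (k*(mu*(eps*eps))) = r0) by (field; split; lra).
    apply Hfin; auto.
    pose proof (Hdec t ltac:(lra)) as Hd1. pose proof (Hall 1 ltac:(lra)) as Hv1.
    pose proof (Hall t ltac:(lra)) as Hvt.
    set (Vt := Qf p r s (x t - eH) (y t - eL)) in *.
    set (V1 := Qf p r s (x 1 - eH) (y 1 - eL)) in *.
    assert (HVt0 : 0 <= Vt) by (pose proof (HQl (x t - eH) (y t - eL)) as HH; fold Vt in HH; pose proof (Rle_0_sqr (x t - eH)); pose proof (Rle_0_sqr (y t - eL)); unfold Rsqr in *; assert (0 <= mu * ((x t - eH) * (x t - eH) + (y t - eL) * (y t - eL))) by (apply Rmult_le_pos; lra); lra).
    assert (Hex : exp (k*t) = exp (k*(t-1)) * exp k) by (rewrite <- exp_plus; f_equal; ring).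
    assert (Hex2 : 1 + k*(t-1) <= exp (k*(t-1))) by (destruct (Req_dec (k*(t-1)) 0) as [E|E]; [rewrite E, exp_0; lra| left; apply exp_ineq1; auto]).
    pose proof (exp_pos k).
    assert (exp k * ((1 + k*(t-1)) * Vt) <= exp k * r0).
    { assert ((1 + k*(t-1)) * Vt <= exp (k*(t-1)) * Vt) by (apply Rmult_le_compat_r; auto).
      assert (exp k * V1 <= exp k * r0) by (apply Rmult_le_compat_l; lra). nra. }
    assert ((1 + k*(t-1)) * Vt <= r0) by (apply (Rmult_le_reg_l (exp k)); auto).
    destruct (Rlt_or_le Vt (mu*(eps*eps))) as [ok|bad]; auto.
    exfalso.
    assert (k*(t-1) >= k*(r0/(k*(mu*(eps*eps))))) by (apply Rle_ge, Rmult_le_compat_l; lra).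
    assert ((1 + k*(t-1)) * Vt >= (1 + k*(r0/(k*(mu*(eps*eps))))) * (mu*(eps*eps))) by (apply Rle_ge, Rmult_le_compat; nra).
    assert (k*(r0/(k*(mu*(eps*eps)))) * (mu*(eps*eps)) = r0) by (rewrite <- Hq' at 2; ring).
    nra.
Qed.

Lemma rem_bound B u v : 0 <= B -> Rabs (- (B*u*(u+v))) <= B * ((Rabs u + Rabs v)*(Rabs u + Rabs v)).
Proof. intros HB. rewrite Rabs_Ropp, !Rabs_mult, (Rabs_pos_eq B HB).
  pose proof (Rabs_triang u v). pose proof (Rabs_pos u). pose proof (Rabs_pos v). pose proof (Rabs_pos (u+v)).
  rewrite Rmult_assoc. apply Rmult_le_compat_l; auto. nra. Qed.

Ltac posit := match goal with
 | |- 0 < ?x * ?y => apply Rmult_lt_0_compat; [posit|posit]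
 | |- 0 <= ?x * ?y => apply Rmult_le_pos; [posit|posit]
 | _ => lra end.

Theorem lemma2 (bH bL gH gL qHL qLH alpha zS eH eL : R)
  (HbH : 0 < bH) (HbL : 0 < bL) (HgH : 0 < gH) (HgL : 0 < gL)
  (Hratio : bH / gH > bL / gL) (Hb : bH > bL)
  (HqHL : 0 <= qHL) (HqLH : 0 <= qLH)
  (Halpha : 0 < alpha < 1) (HzS : 0 <= zS <= 1)
  (HeH : 0 < eH < 1) (HeL : 0 < eL < 1)
  (Heq : is_equilibrium (fH bH bL gH gL qHL qLH alpha zS)
                        (fL bH bL gH gL qHL qLH alpha zS) eH eL) :
  locally_stable (fH bH bL gH gL qHL qLH alpha zS)
                 (fL bH bL gH gL qHL qLH alpha zS) eH eL.
Proof.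
  destruct Heq as [E1 E2].
  set (kap := alpha*zS + 1 - zS).
  assert (Hkap : 0 < kap) by (unfold kap; nra).
  set (BH := bhat bH alpha zS). set (BL := bhat bL alpha zS).
  assert (HBH : BH = bH*kap) by reflexivity. assert (HBL : BL = bL*kap) by reflexivity.
  assert (HBH0 : 0 < BH) by (rewrite HBH; nra). assert (HBL0 : 0 < BL) by (rewrite HBL; nra).
  assert (Hr : bH*gL > bL*gH).
  { assert (bH / gH * (gH*gL) > bL / gL * (gH*gL)) by (apply Rmult_gt_compat_r; [nra| exact Hratio]).
    replace (bH / gH * (gH*gL)) with (bH*gL) in H by (field; lra).
    replace (bL / gL * (gH*gL)) with (bL*gH) in H by (field; lra). exact H. }
  set (a := BH*(1 - 2*eH - eL) - qHL - gH).
  set (b := -BH*eH + qLH).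
  set (c := -BL*eL + qHL).
  set (d := BL*(1 - eH - 2*eL) - qLH - gL).
  assert (Ea : a*eH = -qLH*eL - BH*eH*eH).
  { assert (a*eH - (-qLH*eL - BH*eH*eH) = fH bH bL gH gL qHL qLH alpha zS eH eL) by (unfold fH, a; fold BH; ring).
    lra. }
  assert (Ed : d*eL = -qHL*eH - BL*eL*eL).
  { assert (d*eL - (-qHL*eH - BL*eL*eL) = fL bH bL gH gL qHL qLH alpha zS eH eL) by (unfold fL, d; fold BL; ring).
    lra. }
  assert (Ha : a < 0).
  { assert (0 < BH*eH*eH) by posit.
    assert (0 <= qLH*eL) by (apply Rmult_le_pos; lra).
    assert (a*eH < 0) by lra. destruct (Rlt_or_le a 0) as [h|h]; auto. assert (0 <= a*eH) by (apply Rmult_le_pos; lra). lra. }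
  assert (Hd : d < 0).
  { assert (0 < BL*eL*eL) by posit.
    assert (0 <= qHL*eH) by (apply Rmult_le_pos; lra).
    assert (d*eL < 0) by lra. destruct (Rlt_or_le d 0) as [h|h]; auto. assert (0 <= d*eL) by (apply Rmult_le_pos; lra). lra. }
  assert (HDe : Dt a b c d * (eH*eL) = (eH+eL)*(qLH*BL*eL*eL + BH*qHL*eH*eH)).
  { unfold Dt. replace (((a*d - b*c)*(eH*eL))) with ((a*eH)*(d*eL) - (b*eH)*(c*eL)) by ring.
    rewrite Ea, Ed. unfold b, c. ring. }
  assert (Hpos : 0 < qLH*BL*eL*eL + BH*qHL*eH*eH).
  { destruct (Req_dec qLH 0) as [Z1|Z1]; destruct (Req_dec qHL 0) as [Z2|Z2].
    - exfalso. rewrite Z1, Z2 in E1, E2.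
      assert (X1 : BH*(1-eH-eL) = gH).
      { unfold fH in E1. fold BH in E1. apply (Rmult_eq_reg_l eH); [|lra]. lra. }
      assert (X2 : BL*(1-eH-eL) = gL).
      { unfold fL in E2. fold BL in E2. apply (Rmult_eq_reg_l eL); [|lra]. lra. }
      rewrite HBH in X1. rewrite HBL in X2.
      assert (bH*gL = bL*gH) by (rewrite <- X1, <- X2; ring). lra.
    - assert (0 < BH*qHL*eH*eH) by posit.
      assert (0 <= qLH*BL*eL*eL) by posit. lra.
    - assert (0 < qLH*BL*eL*eL) by posit.
      assert (0 <= BH*qHL*eH*eH) by posit. lra.
    - assert (0 < BH*qHL*eH*eH) by posit.
      assert (0 <= qLH*BL*eL*eL) by posit. lra. }
  assert (HD : 0 < Dt a b c d).
  { assert (0 < Dt a b c d * (eH*eL)) by (rewrite HDe; apply Rmult_lt_0_compat; lra).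
    assert (0 < eH*eL) by nra. nra. }
  apply (planar_stable _ _ eH eL a b c d (BH+BL)); [lra | exact HD | lra | |].
  - intros u v.
    replace (fH bH bL gH gL qHL qLH alpha zS (eH+u) (eL+v) - (a*u+b*v)) with (- (BH*u*(u+v))).
    + eapply Rle_trans; [apply rem_bound; lra|]. apply Rmult_le_compat_r; [|lra].
      pose proof (Rabs_pos u); pose proof (Rabs_pos v). nra.
    + assert (fH bH bL gH gL qHL qLH alpha zS (eH+u) (eL+v) - (a*u+b*v) = fH bH bL gH gL qHL qLH alpha zS eH eL - BH*u*(u+v)) by (unfold fH, a, b; fold BH; ring).
      lra.
  - intros u v.
    replace (fL bH bL gH gL qHL qLH alpha zS (eH+u) (eL+v) - (c*u+d*v)) with (- (BL*v*(u+v))).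
    + replace (- (BL*v*(u+v))) with (- (BL*v*(v+u))) by ring.
      eapply Rle_trans; [apply rem_bound; lra|]. replace (Rabs v + Rabs u) with (Rabs u + Rabs v) by ring.
      apply Rmult_le_compat_r; [|lra].
      pose proof (Rabs_pos u); pose proof (Rabs_pos v). nra.
    + assert (fL bH bL gH gL qHL qLH alpha zS (eH+u) (eL+v) - (c*u+d*v) = fL bH bL gH gL qHL qLH alpha zS eH eL - BL*v*(u+v)) by (unfold fL, c, d; fold BL; ring).
      lra.
Qed.
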